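(* Let $S\in\mathbb{R}^{n\times n_s}$ and $T\in\mathbb{R}^{n\times n_t}$, and let $\mathcal{C}_{\mathrm{LP}}=\{M\in\mathbb{R}_{\ge0}^{n_s\times n_t} : SM=T\}$, with $d$ its (affine) dimension. Let $\mathcal{F}_{\mathrm{LP}}=\{x\in\mathbb{R}^{1\times n_s} : |\{xM : M\in\mathcal{C}_{\mathrm{LP}}\}|=1\}$. Let $X$ be a finite set of test inputs (row vectors in $\mathbb{R}^{1\times n_s}$). Let $M_1$ be any mapping in $\mathcal{C}_{\mathrm{LP}}$, and let $\mathrm{vec}(M_2)$ be sampled from a proper density (absolutely continuous w.r.t. $d$-dimensional Lebesgue measure) over a $d$-dimensional ball lying in $\mathcal{C}_{\mathrm{LP}}$ centered at $\mathrm{vec}(M_1)$. Then, with probability 1, for all $x\in X$, $xM_1=xM_2$ implies $x\in\mathcal{F}_{\mathrm{LP}}$.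
   Context: $\mathrm{vec}(M)$ denotes the vectorization of the matrix $M$. Rows of $S$ are count vectors of training inputs (bags of source atoms over $n_s$ types) and rows of $T$ the corresponding output count vectors (over $n_t$ target atom types); a (relaxed) mapping is a real nonnegative matrix $M$ with output $xM$ on input $x$. A $d$-dimensional ball lying in $\mathcal{C}_{\mathrm{LP}}$ means a ball of dimension $d$ within the affine hull of $\mathcal{C}_{\mathrm{LP}}$ and contained in $\mathcal{C}_{\mathrm{LP}}$. *)

(* Defs.v *)
From HB Require Import structures.
From mathcomp Require Import all_boot all_order all_algebra.
From mathcomp Require Import all_classical all_reals all_analysis.
Set Implicit Arguments. Unset Strict Implicit. Unset Printing Implicit Defensive.
Import Order.TTheory GRing.Theory Num.Theory.
Local Open Scope classical_set_scope.
Local Open Scope ring_scope.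

Section Defs.
Variable R : realType.

Definition CLP (n ns nt : nat) (S : 'M[R]_(n, ns)) (T : 'M[R]_(n, nt))
  : set 'M[R]_(ns, nt) :=
  [set M : 'M[R]_(ns, nt) | (forall i j, 0 <= M i j) /\ S *m M = T].

Definition FLP (n ns nt : nat) (S : 'M[R]_(n, ns)) (T : 'M[R]_(n, nt))
  : set 'rV[R]_ns :=
  [set x : 'rV[R]_ns | exists y : 'rV[R]_nt,
      forall z, (exists2 M, CLP S T M & z = x *m M) <-> z = y].

(* Frobenius inner product = Euclidean inner product of vec(A), vec(B) *)
Definition frob_dot (m k : nat) (A B : 'M[R]_(m, k)) : R :=
  \sum_(i < m) \sum_(j < k) A i j * B i j.

Definition sqnorm (d : nat) (y : 'rV[R]_d) : R := \sum_(i < d) y 0 i ^+ 2.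

Definition lin_comb (d m k : nat) (B : 'I_d -> 'M[R]_(m, k)) (y : 'rV[R]_d)
  : 'M[R]_(m, k) := \sum_(i < d) y 0 i *: B i.

Definition box (d : nat) (a b : 'rV[R]_d) : set 'rV[R]_d :=
  [set y : 'rV[R]_d | forall i, a 0 i <= y 0 i <= b 0 i].

Definition lebesgue_null (d : nat) (A : set 'rV[R]_d) : Prop :=
  forall eps : R, 0 < eps ->
    exists a b : nat -> 'rV[R]_d,
      [/\ forall k i, a k 0 i <= b k 0 i,
          A `<=` \bigcup_k box (a k) (b k) &
          forall N, \sum_(k < N) \prod_(i < d) (b k 0 i - a k 0 i) < eps].

End Defs.

(* Main.v *)
Require Import Defs.
From HB Require Import structures.
From mathcomp Require Import all_boot all_order all_algebra.
From mathcomp Require Import all_classical all_reals all_analysis.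
From mathcomp Require Import ring lra zify.
From Stdlib Require Import Lia.
Import Order.TTheory GRing.Theory Num.Theory.
Local Open Scope classical_set_scope.
Local Open Scope ring_scope.

Lemma grid_idx (R : realType) (N : nat) (t : R) : (0 < N)%N -> 0 <= t <= N%:R ->
  exists k : 'I_N, k%:R <= t <= k%:R + 1.
Proof.
move=> N0 /andP[t0 tN].
have /andP[h1 h2] := truncn_itv t0.
have kN : (minn (Num.truncn t) N.-1 < N)%N by lia.
exists (Ordinal kN) => /=.
case: (leqP (Num.truncn t) N.-1) => hk.
  apply/andP; split => //.
  by rewrite -natr1 in h2; rewrite ltW.
idtac.
have : N%:R <= (Num.truncn t)%:R :> R by rewrite ler_nat; lia.
move=> hN; have tE : t = N%:R by apply/le_anti; rewrite tN (le_trans hN h1).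
rewrite tE; have -> : N = N.-1.+1 by lia.
rewrite -natr1 -pred_Sn lerDl ler01 lexx /=. done.
Qed.

Lemma sum_lt_minn (R : realType) (N' sz : nat) :
  \sum_(k < N') ((k < sz)%N%:R : R) = (minn N' sz)%:R.
Proof.
elim: N' => [|N' IH]; first by rewrite big_ord0 min0n.
rewrite big_ord_recr /= IH -natrD; congr (_ %:R).
case: ltnP => h /=; lia.
Qed.

Lemma hyper_null (R : realType) (d : nat) (a : 'I_d -> R) (i0 : 'I_d) (r : R) :
  0 < r -> a i0 = 1 ->
  lebesgue_null [set y : 'rV[R]_d | (forall i, -r <= y 0 i <= r) /\
                                   \sum_i a i * y 0 i = 0].
Proof.
case: d a i0 => [|d'] a i0; first by case: i0.
move=> r0 a0 eps e0.
pose K : R := \sum_i `|a i|.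
have KK : \sum_(i | i != i0) `|a i| <= K.
  by rewrite /K [leRHS](bigD1 i0) //= lerDr.
have K1 : 1 <= K by rewrite /K (bigD1 i0) //= a0 normr1 lerDl sumr_ge0.
have K0 : 0 < K by lra.
set C := K * (2 * r) ^+ d'.+1 / eps.
have C0 : 0 <= C.
  by rewrite /C divr_ge0 ?(ltW e0) // mulr_ge0 ?(ltW K0) // exprn_ge0 //; lra.
pose N := Num.bound C.
have HC : C < N%:R by apply: archi_boundP.
have N0 : (0 < N)%N by rewrite -(ltr_nat R); apply: le_lt_trans HC.
have N0R : 0 < N%:R :> R by rewrite ltr0n.
set h := 2 * r / N%:R.
have h0 : 0 < h by rewrite /h divr_gt0 //; lra.
have Nh : N%:R * h = 2 * r by rewrite /h mulrC divfK // gt_eqF.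
set w := K * h / N%:R.
have w0 : 0 < w by rewrite /w divr_gt0 // mulr_gt0.
have Nw : w * N%:R = K * h by rewrite /w divfK // gt_eqF.
pose c (g : 'I_d'.+1 -> 'I_N) :=
  - \sum_(i | i != i0) a i * (- r + (g i)%:R * h + h / 2).
pose len (i : 'I_d'.+1) := if i == i0 then w else h.
have len0 : forall i, 0 <= len i by move=> i; rewrite /len; case: ifP => _; apply: ltW.
pose lo (g : 'I_d'.+1 -> 'I_N) (i : 'I_d'.+1) :=
  if i == i0 then c g - K * h / 2 + (g i)%:R * w else - r + (g i)%:R * h.
pose G := {ffun 'I_d'.+1 -> 'I_N}.
pose s := enum G.
pose sz := size s.
pose g0 : G := [ffun _ => Ordinal N0].
pose A k : 'rV[R]_d'.+1 := if (k < sz)%N then \row_i lo (nth g0 s k) i else 0.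
pose Bb k : 'rV[R]_d'.+1 :=
  if (k < sz)%N then \row_i (lo (nth g0 s k) i + len i) else 0.
exists A, Bb; split.
- move=> k i; rewrite /A /Bb; case: ifP => _; rewrite !mxE ?lerDl //.
- move=> y [yb ysum].
  have yi0 : y 0 i0 = - \sum_(i | i != i0) a i * y 0 i.
    by move: ysum; rewrite (bigD1 i0) //= a0 mul1r => /eqP; rewrite addr_eq0 => /eqP.
  have gi : forall i, exists k : 'I_N, k%:R <= (y 0 i + r) / h <= k%:R + 1.
    move=> i; apply: grid_idx => //; have /andP[l u] := yb i.
    apply/andP; split; first by apply: divr_ge0; lra.
    by rewrite ler_pdivrMr // Nh; lra.
  have [f Hf] : exists f : 'I_d'.+1 -> 'I_N,
      forall i, (f i)%:R <= (y 0 i + r) / h <= (f i)%:R + 1.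
    by exists (fun i => xchoose (gi i)) => i; exact: (xchooseP (gi i)).
  have Hf2 : forall i, - r + (f i)%:R * h <= y 0 i <= - r + (f i)%:R * h + h.
    move=> i; have /andP[l u] := Hf i.
    rewrite ler_pdivlMr // in l; rewrite ler_pdivrMr // mulrDl mul1r in u.
    apply/andP; split; lra.
  have cbound : `|y 0 i0 - c f| <= K * h / 2.
    rewrite yi0 /c opprK addrC -sumrB.
    apply: (le_trans (ler_norm_sum _ _ _)).
    apply: (le_trans (y := \sum_(i | i != i0) `|a i| * (h / 2))).
      apply: ler_sum => i _; rewrite -mulrBr normrM ler_wpM2l //.
      have /andP[l u] := Hf2 i; rewrite ler_norml; apply/andP; split; lra.
    by rewrite -mulr_suml -mulrA ler_wpM2r // divr_ge0 // ltW.
  have gi0 : exists k : 'I_N, k%:R <= (y 0 i0 - c f + K * h / 2) / w <= k%:R + 1.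
    apply: grid_idx => //; move: cbound; rewrite ler_norml => /andP[l u].
    apply/andP; split; first by apply: divr_ge0; [lra | apply: ltW].
    by rewrite ler_pdivrMr // [N%:R * w]mulrC Nw; lra.
  case: gi0 => k0 Hk0.
  pose g : G := [ffun i => if i == i0 then k0 else f i].
  have cg : c g = c f.
    by rewrite /c; congr (- _); apply: eq_bigr => i /negbTE hi; rewrite ffunE hi.
  have gs : g \in s by rewrite mem_enum.
  exists (index g s) => //.
  rewrite /A /Bb index_mem gs nth_index // => i.
  rewrite !mxE /lo /len; case: eqP => [->|/eqP hi].
    rewrite ffunE eqxx cg; have /andP[l u] := Hk0.
    rewrite ler_pdivlMr // in l; rewrite ler_pdivrMr // mulrDl mul1r in u.
    apply/andP; split; lra.
  by rewrite ffunE (negbTE hi); apply: Hf2.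
- move=> N'.
  have vE : \prod_i len i = w * h ^+ d'.
    rewrite (bigD1 i0) //= {1}/len eqxx; congr (_ * _).
    rewrite (eq_bigr (fun _ => h)) => [|i /negbTE hi]; last by rewrite /len hi.
    by rewrite prodr_const cardC1 card_ord.
  have termE : forall k, \prod_i (Bb k 0 i - A k 0 i) = (k < sz)%N%:R * \prod_i len i.
    move=> k; rewrite /A /Bb; case: ifP => _.
      by rewrite mul1r; apply: eq_bigr => i _; rewrite !mxE addrAC subrr add0r.
    by rewrite mul0r (bigD1 i0) //= !mxE subrr mul0r.
  rewrite (eq_bigr (fun k : 'I_N' => (k < sz)%N%:R * \prod_i len i)); last by move=> k _; rewrite termE.
  rewrite -mulr_suml sum_lt_minn.
  have szE : sz = (N ^ d'.+1)%N by rewrite /sz -cardE card_ffun !card_ord.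
  apply: (le_lt_trans (y := sz%:R * \prod_i len i)).
    by rewrite ler_wpM2r ?ler_nat ?geq_minr // prodr_ge0.
  rewrite szE natrX vE.
  have -> : N%:R ^+ d'.+1 * (w * h ^+ d') = C * eps / N%:R.
    rewrite /C /w -Nh [(_ * h) ^+ _]exprMn !exprS; field.
    by apply/andP; split; rewrite gt_eqF.
  by rewrite ltr_pdivrMr // mulrC ltr_pM2l.
Qed.

Lemma xlin (R : realType) ns nt d (B : 'I_d -> 'M[R]_(ns, nt)) (x : 'rV[R]_ns) y :
  x *m lin_comb B y = \sum_i y 0 i *: (x *m B i).
Proof.
by rewrite /lin_comb mulmx_sumr; apply: eq_bigr => i _; rewrite scalemxAr.
Qed.

Lemma notFLP_wit (R : realType) (n ns nt : nat)
  (S : 'M[R]_(n, ns)) (T : 'M[R]_(n, nt)) (M1 : 'M[R]_(ns, nt)) (HM1 : CLP S T M1)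
  (d : nat) (B : 'I_d -> 'M[R]_(ns, nt))
  (Bspan : forall M M', CLP S T M -> CLP S T M' ->
             exists y : 'rV[R]_d, M - M' = lin_comb B y) (x : 'rV[R]_ns) :
  ~ FLP S T x -> exists i0 j, (x *m B i0) 0 j != 0.
Proof.
move=> nF; case: (pselect (exists i0 j, (x *m B i0) 0 j != 0)) => // no.
exfalso; apply: nF.
have allz : forall i, x *m B i = 0.
  move=> i; apply/rowP => j; rewrite [RHS]mxE.
  case: (eqVneq ((x *m B i) 0 j) 0) => // hne; exfalso; apply: no; exists i, j.
  exact: hne.
exists (x *m M1) => z; split.
  case=> M HM ->; have [yy Hy] := Bspan _ _ HM HM1.
  have -> : M = M1 + lin_comb B yy by rewrite -Hy addrC subrK.
  rewrite mulmxDr xlin big1 ?addr0 // => i _; by rewrite allz scaler0.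
by move=> ->; exists M1.
Qed.

Theorem proposition3 (R : realType) (n ns nt : nat)
  (S : 'M[R]_(n, ns)) (T : 'M[R]_(n, nt))
  (X : seq 'rV[R]_ns)
  (M1 : 'M[R]_(ns, nt)) (HM1 : CLP S T M1)
  (* d and an orthonormal basis B of the direction space of aff(C_LP) *)
  (d : nat) (B : 'I_d -> 'M[R]_(ns, nt))
  (Borth : forall i j, frob_dot (B i) (B j) = (i == j)%:R)
  (Bspan : forall M M', CLP S T M -> CLP S T M' ->
             exists y : 'rV[R]_d, M - M' = lin_comb B y)
  (* the d-dimensional ball of radius r centred at M1 lies in C_LP *)
  (r : R) (Hr : 0 < r)
  (Hball : forall y : 'rV[R]_d, sqnorm y < r ^+ 2 -> CLP S T (M1 + lin_comb B y))
  (* the random point: vec(M2) = vec(M1 + sum_i Y_i B_i) *)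
  (dO : measure_display) (Omega : measurableType dO)
  (P : probability Omega R) (Y : Omega -> 'rV[R]_d)
  (Hsupp : P.-negligible [set w | ~ (sqnorm (Y w) < r ^+ 2)])
  (Hac : forall A : set 'rV[R]_d, lebesgue_null A -> P.-negligible (Y @^-1` A)) :
  P.-negligible
    [set w | exists2 x, x \in X &
       x *m M1 = x *m (M1 + lin_comb B (Y w)) /\ ~ FLP S T x].
Proof.
have Ax : forall x, P.-negligible [set w | sqnorm (Y w) < r ^+ 2 /\
     x *m lin_comb B (Y w) = 0 /\ ~ FLP S T x].
  move=> x; case: (pselect (FLP S T x)) => hF.
    by apply: (negligibleS _ (negligible_set0 P)) => w [_ [_ ]].
  have [i0 [j hc]] := @notFLP_wit _ _ _ _ S T M1 HM1 d B Bspan x hF.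
  pose c i := (x *m B i) 0 j.
  pose a i := c i / c i0.
  have a0 : a i0 = 1 by rewrite /a divff.
  have hn := Hac _ (@hyper_null _ _ a i0 r Hr a0).
  apply: (negligibleS _ hn) => w [hs [hz _]].
  rewrite /preimage /=; split.
    move=> i; have : Y w 0 i ^+ 2 <= sqnorm (Y w).
      by rewrite /sqnorm (bigD1 i) //= lerDl sumr_ge0 // => k _; rewrite sqr_ge0.
    move=> hi; apply/andP; split; nra.
  have e : \sum_i Y w 0 i * c i = 0.
    have := congr1 (fun m : 'rV[R]_nt => m 0 j) hz; rewrite xlin summxE [RHS]mxE => e0; rewrite -{}[RHS]e0.
    by apply: eq_bigr => i _; rewrite mxE.
  have -> : \sum_i a i * Y w 0 i = (\sum_i Y w 0 i * c i) / c i0.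
    rewrite mulr_suml; apply: eq_bigr => i _; rewrite /a; field.
    exact: hc.
  by rewrite e mul0r.
have key : forall X' : seq 'rV[R]_ns, P.-negligible [set w | exists2 x, x \in X' &
     (sqnorm (Y w) < r ^+ 2 /\ x *m lin_comb B (Y w) = 0 /\ ~ FLP S T x)].
  elim => [|x X' IH].
    by apply: (negligibleS _ (negligible_set0 P)) => w [z]; rewrite in_nil.
  apply: (negligibleS _ (negligibleU (Ax x) IH)) => w [z].
  rewrite in_cons => /orP [/eqP -> H | zX H]; [by left | by right; exists z].
apply: (negligibleS _ (negligibleU Hsupp (key X))) => w [x xX [heq nF]].
case: (pselect (sqnorm (Y w) < r ^+ 2)) => hs; [right; exists x => // | by left].
split => //; split => //.
have : x *m M1 + 0 = x *m M1 + x *m lin_comb B (Y w) by rewrite addr0 -mulmxDr.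
by move/addrI => <-.
Qed.
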